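(* Let $C_{\mathsf{Bern}}>0$. There exist constants $c>0$ and $N_0$, depending only on $C_{\mathsf{Bern}}$, such that for every $n\ge N_0$ and every function $f\colon\{0,1\}^n\to\mathbb R$ satisfying \[\sup_{p\in[0,1]}\mathbb E_{X\sim\mathrm{Bern}(p)^{\otimes n}}|f(X)-p|\le\frac{C_{\mathsf{Bern}}}{\sqrt n},\] and every $\eta\in(0,1)$ with $\lfloor\eta n\rfloor\ge1$, we have \[\sup_{p\in[0,1]}\mathbb E_{X\sim\mathrm{Bern}(p)^{\otimes n}}[S^f_\eta(X)]\ge c\,\eta.\]
   Context: For $x,y\in\{0,1\}^n$, $d_H(x,y)=\#\{i: x_i\ne y_i\}$. For $f\colon\{0,1\}^n\to\mathbb R$ and $\eta\in(0,1)$, $S^f_\eta(x)=\sup_{y\in\{0,1\}^n\colon d_H(x,y)\le\lfloor\eta n\rfloor}|f(y)-f(x)|$. *)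

(* Defs.v *)
From HB Require Import structures.
From mathcomp Require Import all_boot all_order all_algebra.
From mathcomp Require Import classical_sets reals.
Set Implicit Arguments. Unset Strict Implicit. Unset Printing Implicit Defensive.
Import Order.TTheory GRing.Theory Num.Theory.
Local Open Scope ring_scope.

(* The hypercube {0,1}^n, encoded as functions 'I_n -> bool (true = 1). *)
Notation cube n := {ffun 'I_n -> bool}.

Definition dH (n : nat) (x y : cube n) : nat := #|[pred i | x i != y i]|.

Definition bern_mass {R : realType} (n : nat) (p : R) (x : cube n) : R :=
  \prod_(i < n) (if x i then p else 1 - p).

Definition bern_exp {R : realType} (n : nat) (p : R) (g : cube n -> R) : R :=
  \sum_(x : cube n) bern_mass p x * g x.

Definition sup_bern {R : realType} (n : nat) (g : R -> cube n -> R) : R :=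
  sup [set bern_exp p (g p) | p in [set p : R | 0 <= p <= 1]]%classic.

(* S^f_eta(x) = sup_{y : dH x y <= floor(eta n)} |f y - f x|, a finite max
   over a nonempty set (contains x) of nonnegative reals, so 0 is a neutral
   default. *)
Definition Sens {R : realType} (n : nat) (f : cube n -> R) (eta : R) (x : cube n) : R :=
  \big[Num.max/0]_(y : cube n | (dH x y)%:Z <= Num.floor (eta * n%:R))
     `|f y - f x|.

(* Main.v *)
Require Import Defs.
From HB Require Import structures.
From mathcomp Require Import all_boot all_order all_algebra.
From mathcomp Require Import classical_sets reals.
From mathcomp Require Import zify ring lra polyrcf.
Import Order.TTheory GRing.Theory Num.Theory.
Local Open Scope ring_scope.
Set Implicit Arguments. Unset Strict Implicit. Unset Printing Implicit Defensive.

Lemma binC2 n k k' : (k <= k' <= n)%N ->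
  ('C(n, k') * 'C(k', k) = 'C(n, k) * 'C(n - k, k' - k))%N.
Proof.
move=> /andP[h1 h2].
have hX : (0 < k`! * (k' - k)`! * (n - k')`!)%N by rewrite !muln_gt0 !fact_gt0.
apply/eqP; rewrite -(eqn_pmul2r hX); apply/eqP.
transitivity (n`!).
  rewrite -(bin_fact h2) -(bin_fact h1).
  move: ('C(n, k')) ('C(k', k)) (k`!) ((k'-k)`!) ((n-k')`!) => a b c d e; ring.
have h3 : (k' - k <= n - k)%N by lia.
have h4 : (n - k - (k' - k) = n - k')%N by lia.
rewrite -(bin_fact (leq_trans h1 h2)) -(bin_fact h3) h4.
move: ('C(n, k)) ('C(n-k, k'-k)) (k`!) ((k'-k)`!) ((n-k')`!) => a b c d e; ring.
Qed.

Section Cube.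
Variable R : realType.
Variable n : nat.

Definition s2c (X : {set 'I_n}) : cube n := [ffun i => i \in X].
Definition c2s (x : cube n) : {set 'I_n} := [set i | x i].

Lemma s2cK : cancel s2c c2s.
Proof. by move=> X; apply/setP => i; rewrite inE ffunE. Qed.
Lemma c2sK : cancel c2s s2c.
Proof. by move=> x; apply/ffunP => i; rewrite ffunE inE. Qed.

Lemma sum_cube (g : cube n -> R) :
  \sum_(x : cube n) g x = \sum_(X : {set 'I_n}) g (s2c X).
Proof.
rewrite (reindex s2c) //; exists c2s => x _; [exact: s2cK | exact: c2sK].
Qed.

Definition lev (g : {set 'I_n} -> R) (k : nat) : R :=
  \sum_(X : {set 'I_n} | #|X| == k) g X.

Lemma sum_levels (g : {set 'I_n} -> R) :
  \sum_(X : {set 'I_n}) g X = \sum_(k < n.+1) lev g k.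
Proof.
rewrite (partition_big (fun X : {set 'I_n} => (inord #|X| : 'I_n.+1)) xpredT) //=.
apply: eq_bigr => k _; apply: eq_bigl => X.
have hX : (#|X| < n.+1)%N by rewrite ltnS -[n in (_ <= n)%N]card_ord max_card.
apply/eqP/eqP => [hk|hk].
  by rewrite -hk inordK.
by apply: val_inj; rewrite /= inordK // hk.
Qed.

Lemma mass_s2c (p : R) X :
  bern_mass p (s2c X) = p ^+ #|X| * (1 - p) ^+ (n - #|X|).
Proof.
rewrite /bern_mass (bigID (fun i => i \in X)) /=.
rewrite (eq_bigr (fun _ => p)); last by move=> i hi; rewrite ffunE hi.
rewrite [X in _ * X](eq_bigr (fun _ => 1 - p)); last by move=> i hi; rewrite ffunE (negbTE hi).
rewrite !prodr_const; congr (_ ^+ _ * _ ^+ _).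
rewrite -[n in (n - _)%N]card_ord -(cardC X) addKn.
by apply: eq_card => i; rewrite !inE.
Qed.

Lemma bern_levels (p : R) (g : cube n -> R) :
  bern_exp p g = \sum_(k < n.+1) p ^+ k * (1 - p) ^+ (n - k) * lev (g \o s2c) k.
Proof.
rewrite /bern_exp sum_cube sum_levels; apply: eq_bigr => k _.
rewrite /lev mulr_sumr; apply: eq_bigr => X /eqP hX.
by rewrite mass_s2c hX.
Qed.

End Cube.

Section Cnt.
Variable R : realType.
Variable n : nat.

Lemma cardC_n (Z : {set 'I_n}) : #|~: Z| = (n - #|Z|)%N.
Proof. by rewrite cardsCs finset.setCK card_ord. Qed.

Lemma card_le_n (Z : {set 'I_n}) : (#|Z| <= n)%N.
Proof. by rewrite -[n in (_ <= n)%N]card_ord max_card. Qed.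

Lemma cnt_sub (Y : {set 'I_n}) (k : nat) (c : R) :
  \sum_(X : {set 'I_n} | (X \subset Y) && (#|X| == k)) c = c *+ 'C(#|Y|, k).
Proof.
rewrite sumr_const -cards_draws; congr (_ *+ _).
by apply: eq_card => X; rewrite inE.
Qed.

Lemma cnt_sup (X : {set 'I_n}) (k' : nat) (c : R) :
  (#|X| <= k' <= n)%N ->
  \sum_(Y : {set 'I_n} | (X \subset Y) && (#|Y| == k')) c = c *+ 'C(n - #|X|, k' - #|X|).
Proof.
move=> /andP[h1 h2].
rewrite (reindex_inj (inv_inj (@finset.setCK _))) /=.
rewrite (eq_bigl (fun Z : {set 'I_n} => (Z \subset ~: X) && (#|Z| == (n - k')%N))); last first.
  move=> Z; rewrite finset.subsetC; congr andb.
  have hZ : #|~: Z| = (n - #|Z|)%N.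
    exact: cardC_n.
  have hz : (#|Z| <= n)%N by rewrite -[n in (_ <= n)%N]card_ord max_card.
  rewrite hZ; apply/eqP/eqP => [<-|->]; rewrite subKn //.
rewrite cnt_sub; congr (_ *+ _).
rewrite cardC_n.
rewrite -bin_sub; last by rewrite leq_sub2l.
congr 'C(_, _); move: h1 h2; move: #|X| => x; lia.
Qed.

End Cnt.

Section Step.
Variable R : realType.
Variable n m : nat.
Variables (f S : {set 'I_n} -> R).
Hypothesis hS : forall X Y : {set 'I_n}, X \subset Y -> (#|Y| - #|X| <= m)%N ->
  `|f Y - f X| <= S X.

Definition Fl k := lev f k / ('C(n, k))%:R.
Definition Al k := lev S k / ('C(n, k))%:R.

Definition DS (h : {set 'I_n} -> {set 'I_n} -> R) k k' :=
  \sum_(X : {set 'I_n} | #|X| == k) \sum_(Y : {set 'I_n} | (X \subset Y) && (#|Y| == k')) h X Y.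

Lemma DS_left (g : {set 'I_n} -> R) k k' : (k <= k' <= n)%N ->
  DS (fun X _ => g X) k k' = ('C(n - k, k' - k))%:R * lev g k.
Proof.
move=> /andP[h1 h2]; rewrite /DS /lev mulr_sumr; apply: eq_bigr => X /eqP hX.
subst k; rewrite cnt_sup ?mulr_natl //; apply/andP; split => //.
Qed.

Lemma DS_right (g : {set 'I_n} -> R) k k' :
  DS (fun _ Y => g Y) k k' = ('C(k', k))%:R * lev g k'.
Proof.
rewrite /DS (exchange_big_dep (fun Y : {set 'I_n} => #|Y| == k')) /=; last first.
  by move=> X Y _ /andP[].
rewrite /lev mulr_sumr; apply: eq_bigr => Y /eqP hY; subst k'.
rewrite (eq_bigl (fun X : {set 'I_n} => (X \subset Y) && (#|X| == k))).
  by rewrite cnt_sub mulr_natl.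
by move=> X; rewrite eqxx andbT andbC.
Qed.

Lemma level_step k k' : (k <= k' <= n)%N -> (k' - k <= m)%N ->
  `|Fl k' - Fl k| <= Al k.
Proof.
move=> hk hm; have /andP[h1 h2] := hk.
have e1 := DS_left f hk; have e2 := DS_right f k k'; have e3 := DS_left S hk.
have hb := binC2 hk.
have hD : `|DS (fun X Y => f Y - f X) k k'| <= DS (fun X _ => S X) k k'.
  rewrite /DS; apply: le_trans (ler_norm_sum _ _ _) _; apply: ler_sum => X /eqP hX.
  apply: le_trans (ler_norm_sum _ _ _) _; apply: ler_sum => Y /andP[hXY /eqP hY].
  by apply: hS => //; rewrite hY hX.
have hDe : DS (fun X Y => f Y - f X) k k' =
    ('C(k', k))%:R * lev f k' - ('C(n - k, k' - k))%:R * lev f k.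
  by rewrite -e1 -e2 /DS -sumrB; apply: eq_bigr => X _; rewrite -sumrB.
rewrite hDe e3 in hD.
have c1 : (0 < 'C(n, k))%N by rewrite bin_gt0 (leq_trans h1 h2).
have c2 : (0 < 'C(n - k, k' - k))%N by rewrite bin_gt0 leq_sub2r.
have c3 : (0 < 'C(n, k'))%N by rewrite bin_gt0.
have c4 : (0 < 'C(k', k))%N by rewrite bin_gt0.
rewrite /Fl /Al.
set a := ('C(n, k))%:R : R; set b := ('C(n - k, k' - k))%:R : R.
set c := ('C(n, k'))%:R : R; set d := ('C(k', k))%:R : R.
have ha : 0 < a by rewrite ltr0n. have hb' : 0 < b by rewrite ltr0n.
have hc : 0 < c by rewrite ltr0n. have hd : 0 < d by rewrite ltr0n.
have hcd : c * d = a * b by rewrite /a /b /c /d -!natrM hb.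
have -> : lev f k' / c - lev f k / a = (d * lev f k' - b * lev f k) / (a * b).
  have q1 : lev f k' / c = d * lev f k' / (a * b).
    by rewrite -hcd; field; rewrite ?gt_eqF.
  have q2 : lev f k / a = b * lev f k / (a * b).
    by field; rewrite ?gt_eqF.
  by rewrite q1 q2 -mulrBl.
rewrite normrM [X in _ * X]ger0_norm; last by rewrite invr_ge0 ltW // mulr_gt0.
rewrite ler_pdivrMr ?mulr_gt0 //.
apply: le_trans hD _.
have -> : lev S k / a * (a * b) = b * lev S k by field; rewrite gt_eqF.
done.
Qed.


Lemma chain_id (F : nat -> R) : (m <= n)%N ->
  m%:R * (F n - F 0%N) =
  \sum_(0 <= w < n) (F (minn (w + m) n) - F w) + \sum_(0 <= w < m) (F w - F 0%N).
Proof.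
move=> hmn.
have E1 : \sum_(0 <= w < n) F w = \sum_(0 <= w < m) F w + \sum_(m <= w < n) F w.
  by rewrite (big_cat_nat (leq0n m) hmn).
have E2 : \sum_(0 <= w < n) F (minn (w + m) n) =
    \sum_(m <= w < n) F w + F n *+ m.
  rewrite (big_cat_nat (leq0n (n - m)) (leq_subr m n)) /=.
  congr (_ + _).
    rewrite -[in RHS](add0n m) big_addn.
    apply: eq_big_nat => i /andP[_ hi]; congr F; apply/minn_idPl.
    by move: hi; lia.
  rewrite -[X in _ = _ *+ X](subKn hmn) -sumr_const_nat.
  apply: eq_big_nat => i /andP[hi _]; congr F; apply/minn_idPr.
  by move: hi; lia.
have E3 : \sum_(0 <= w < m) F 0%N = F 0%N *+ m by rewrite sumr_const_nat subn0.
rewrite !sumrB E1 E2 E3 mulrBr !mulr_natl.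
set s1 := \sum_(m <= i < n) F i; set s2 := \sum_(0 <= i < m) F i.
set a := F n *+ m; set b := F 0%N *+ m.
ring.
Qed.


Lemma chain_le : (m <= n)%N ->
  m%:R * (Fl n - Fl 0%N) <= \sum_(0 <= w < n) Al w + m%:R * Al 0%N.
Proof.
move=> hmn; rewrite (chain_id Fl hmn); apply: lerD.
  rewrite big_nat_cond [in X in _ <= X]big_nat_cond; apply: ler_sum => w /andP[/andP[_ hw] _].
  apply: le_trans (ler_norm _) _; apply: level_step.
    by move: hw; lia.
  by move: hw; lia.
rewrite mulr_natl -[X in _ *+ X]subn0 -sumr_const_nat.
rewrite big_nat_cond [in X in _ <= X]big_nat_cond; apply: ler_sum => w /andP[/andP[_ hw] _].
apply: le_trans (ler_norm _) _; apply: level_step.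
  by rewrite leq0n /= (leq_trans (ltnW hw) hmn).
by rewrite subn0 ltnW.
Qed.

End Step.

Section Poly.
Variable R : realType.

Definition Bp (N j : nat) : {poly R} := ('C(N, j))%:R *: ('X^j * (1 - 'X) ^+ (N - j)).

Lemma hornerBp N j (c : R) : (Bp N j).[c] = ('C(N, j))%:R * (c ^+ j * (1 - c) ^+ (N - j)).
Proof. by rewrite /Bp hornerZ hornerM hornerXn horner_exp !hornerE. Qed.

Lemma derivBp_h n i (c : R) : (i < n)%N ->
  (Bp n.+1 i.+1)^`().[c] = n.+1%:R * ((Bp n i).[c] - (Bp n i.+1).[c]).
Proof.
move=> hi.
rewrite /Bp derivZ derivM derivXn deriv_exp !derivE.
rewrite !hornerE !hornerMn !hornerE /=.
have e1 : (n.+1 - i.+1 = (n - i.+1).+1)%N by lia.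
have e2 : (n - i = (n - i.+1).+1)%N by lia.
rewrite e1 e2 /=.
set A := c ^+ i; set B := (1 - c) ^+ (n - i.+1).
have b1 : ('C(n.+1, i.+1))%:R * (i.+1)%:R = n.+1%:R * ('C(n, i))%:R :> R.
  by rewrite -!natrM mulnC -mul_bin_diag.
have b2 : ('C(n.+1, i.+1))%:R * (n - i.+1).+1%:R = n.+1%:R * ('C(n, i.+1))%:R :> R.
  by rewrite -!natrM -e2 -subSS mulnC -mul_bin_down.
transitivity (('C(n.+1, i.+1))%:R * (i.+1)%:R * (A * (1 - c) * B) -
              ('C(n.+1, i.+1))%:R * (n - i.+1).+1%:R * (c * A * B)).
  rewrite /A /B !exprS; ring.
rewrite b1 b2 /A /B !exprS; ring.
Qed.

End Poly.

Section Poly2.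
Variable R : realType.

Definition Gp (N k : nat) : {poly R} := \sum_(j < k.+1) Bp R N j.

Lemma derivGp n k (c : R) : (k <= n)%N ->
  (Gp n.+1 k)^`().[c] = - (n.+1%:R * (Bp R n k).[c]).
Proof.
elim: k => [|k IH] hk.
  rewrite /Gp big_ord1 /Bp derivZ derivM !derivE deriv_exp !derivE.
  rewrite !hornerE !hornerMn !hornerE /= !bin0 subn0 /=.
  rewrite subn0; ring.
rewrite /Gp big_ord_recr /= derivD hornerD.
rewrite -/(Gp n.+1 k) IH ?(ltnW hk) // derivBp_h //.
ring.
Qed.

Lemma Bp_at0 N j : (Bp R N j).[0] = (j == 0%N)%:R.
Proof.
rewrite hornerBp; case: j => [|j]; first by rewrite bin0 !expr0 subr0 expr1n !mul1r.
by rewrite expr0n /= mul0r mulr0.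
Qed.

Lemma Bp_at1 N j : (j < N)%N -> (Bp R N j).[1] = 0.
Proof.
move=> hj; rewrite hornerBp subrr expr0n.
have -> : ((N - j)%N == 0%N) = false by apply/negbTE; rewrite -lt0n subn_gt0.
by rewrite mulr0 mulr0.
Qed.

Lemma Gp_at0 N k : (Gp N k).[0] = 1.
Proof.
rewrite /Gp horner_sum big_ord_recl /= Bp_at0 /= big1 ?addr0 //.
by move=> i _; rewrite Bp_at0.
Qed.

Lemma Gp_at1 N k : (k < N)%N -> (Gp N k).[1] = 0.
Proof.
move=> hk; rewrite /Gp horner_sum big1 // => i _; rewrite Bp_at1 //.
exact: (leq_ltn_trans (leq_ord i) hk).
Qed.

End Poly2.

Section MVT.
Variable R : realType.

Lemma avg_bound (a : nat -> R) n (s : R) :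
  (forall c : R, 0 < c < 1 -> \sum_(k < n.+1) a k * (Bp R n k).[c] <= s) ->
  \sum_(k < n.+1) a k <= n.+1%:R * s.
Proof.
move=> hs.
pose H : {poly R} := - \sum_(k < n.+1) a k *: Gp R n.+1 k.
have [c hc hmvt] := poly_mvt H (@ltr01 R).
have H1 : H.[1] = 0.
  rewrite /H hornerN horner_sum big1 ?oppr0 // => k _.
  by rewrite hornerZ Gp_at1 ?mulr0 // ltnS ltnW.
have H0 : H.[0] = - \sum_(k < n.+1) a k.
  by rewrite /H hornerN horner_sum; congr (- _); apply: eq_bigr => k _; rewrite hornerZ Gp_at0 mulr1.
have Hd : (H^`()).[c] = n.+1%:R * \sum_(k < n.+1) a k * (Bp R n k).[c].
  rewrite /H derivN raddf_sum hornerN horner_sum mulr_sumr -sumrN.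
  apply: eq_bigr => k _ /=; rewrite derivZ hornerZ derivGp; last by rewrite -ltnS.
  ring.
move: hmvt; rewrite H1 H0 Hd subr0 mulr1 sub0r opprK => ->.
rewrite ler_pM2l ?ltr0n //; apply: hs.
by move: hc; rewrite in_itv /= => /andP[-> ->].
Qed.

End MVT.

Section Main.
Variable R : realType.
Variable n : nat.

Lemma lev0 (g : {set 'I_n} -> R) : lev g 0 = g finset.set0.
Proof.
rewrite /lev (eq_bigl (pred1 finset.set0)) ?big_pred1_eq // => X.
by rewrite cards_eq0.
Qed.

Lemma levn (g : {set 'I_n} -> R) : lev g n = g finset.setT.
Proof.
rewrite /lev (eq_bigl (pred1 finset.setT)) ?big_pred1_eq // => X /=.
rewrite eqEcard finset.subsetT finset.cardsT card_ord /=.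
apply/eqP/idP => [->//|h]; apply/eqP; rewrite eqn_leq h card_le_n //.
Qed.

Lemma bern_at0 (g : cube n -> R) : bern_exp 0 g = g (s2c finset.set0).
Proof.
rewrite bern_levels big_ord_recl /= expr0 subr0 expr1n !mul1r lev0 big1 ?addr0 //.
by move=> i _; rewrite expr0n /= !mul0r.
Qed.

Lemma bern_at1 (g : cube n -> R) : bern_exp 1 g = g (s2c finset.setT).
Proof.
rewrite bern_levels big_ord_recr /= expr1n subrr subnn expr0 !mul1r levn big1 ?add0r //.
move=> i _; rewrite expr0n.
have -> : ((n - i)%N == 0%N) = false by apply/negbTE; rewrite -lt0n subn_gt0.
by rewrite mulr0 mul0r.
Qed.

Lemma bern_le (p : R) (g : cube n -> R) M : 0 <= p <= 1 ->
  (forall x, `|g x| <= M) -> bern_exp p g <= \sum_(x : cube n) M.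
Proof.
move=> /andP[p0 p1] hM; rewrite /bern_exp; apply: ler_sum => x _.
apply: le_trans (ler_norm _) _; rewrite normrM.
have hm0 : 0 <= bern_mass p x by apply: prodr_ge0 => i _; case: (x i); rewrite ?subr_ge0.
have hm1 : bern_mass p x <= 1.
  by apply: prodr_ile1 => i _; case: (x i); rewrite ?p0 ?p1 ?subr_ge0 ?p1 ?gerBl.
rewrite ger0_norm // -[X in _ <= X]mul1r; apply: ler_pM => //.
Qed.

Lemma sup_ge (G : R -> cube n -> R) p M : 0 <= p <= 1 ->
  (forall q x, 0 <= q <= 1 -> `|G q x| <= M) -> bern_exp p (G p) <= sup_bern G.
Proof.
move=> hp hM; rewrite /sup_bern.
apply: ub_le_sup; last by exists p.
exists (\sum_(x : cube n) M) => y [q hq <-].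
by apply: bern_le => // x; apply: hM.
Qed.

End Main.

Lemma le_sum_abs (R : realType) n (g : cube n -> R) x : `|g x| <= \sum_(y : cube n) `|g y|.
Proof.
rewrite (bigD1 x) //= lerDl; apply: sumr_ge0 => y _; exact: normr_ge0.
Qed.

Lemma dH_sub n (X Y : {set 'I_n}) : X \subset Y ->
  dH (s2c X) (s2c Y) = (#|Y| - #|X|)%N.
Proof.
move=> hXY; rewrite /dH -cardsDS //; apply: eq_card => i; rewrite !inE !ffunE.
case hY: (i \in Y); case hX: (i \in X) => //=.
by move/fintype.subsetP: hXY => /(_ i); rewrite hX hY => /(_ isT).
Qed.

Lemma dH_refl n (x : cube n) : dH x x = 0%N.
Proof. by rewrite /dH; apply: eq_card0 => i; rewrite !inE /= eqxx. Qed.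

Theorem theorem4p1 (R : realType) (CBern : R) (hC : 0 < CBern) :
  exists c : R, 0 < c /\
  exists N0 : nat, forall n : nat, (N0 <= n)%N ->
    forall f : cube n -> R,
      sup_bern (fun p x => `|f x - p|) <= CBern / Num.sqrt (n%:R) ->
      forall eta : R, 0 < eta < 1 -> 1 <= Num.floor (eta * n%:R) ->
        c * eta <= sup_bern (fun _ x => Sens f eta x).
Proof.
exists (1 / 12); split; first by rewrite divr_gt0 ?ltr0n.
exists (Num.truncn (16 * CBern ^+ 2)).+1.
move=> n hn f hf eta /andP[he0 he1] hfl.
set fl := Num.floor (eta * n%:R) in hfl *.
have hfl0 : 0 <= fl by apply: le_trans hfl.
set m := `|fl|%N.
have hm : m%:Z = fl by rewrite /m gez0_abs.
have m1 : (1 <= m)%N by rewrite -(lez_nat 1 m) hm.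
have hmR : m%:R <= eta * n%:R.
  by have := floor_le (eta * n%:R); rewrite -/fl -hm.
have hmR2 : eta * n%:R < m%:R + 1.
  by have := floorD1_gt (eta * n%:R); rewrite -/fl -hm intrD.
have mn : (m <= n)%N.
  rewrite -(ler_nat R); apply: (le_trans hmR); rewrite ler_piMl ?ler0n ?ltW //.
have n1 : (1 <= n)%N := leq_trans m1 mn.
have hsq : 4 * CBern <= Num.sqrt n%:R.
  have h1 : 16 * CBern ^+ 2 < n%:R.
    apply: lt_le_trans (truncnS_gt _) _; rewrite ler_nat //.
  have -> : 4 * CBern = Num.sqrt ((4 * CBern) ^+ 2) by rewrite sqrtr_sqr ger0_norm // mulr_ge0 // ltW.
  by apply: ler_wsqrtr; rewrite exprMn; apply: ltW; have -> : (4 : R) ^+ 2 = 16 by rewrite expr2; lra.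
have hsq0 : 0 < Num.sqrt (n%:R : R) by rewrite sqrtr_gt0 ltr0n.
have hC4 : CBern / Num.sqrt n%:R <= 1 / 4.
  rewrite ler_pdivrMr //; lra.
have hbdf : forall q x, 0 <= q <= 1 -> `| `|f x - q| | <= \sum_(y : cube n) `|f y| + 1.
  move=> q x /andP[q0 q1]; rewrite normr_id; apply: le_trans (ler_normB _ _) _.
  by apply: lerD; [exact: le_sum_abs | rewrite ger0_norm].
have h01 : 0 <= (0:R) <= 1 by apply/andP; split; [exact: lexx | exact: ler01].
have h11 : 0 <= (1:R) <= 1 by apply/andP; split; [exact: ler01 | exact: lexx].
have hf0 : `|f (s2c finset.set0)| <= 1 / 4.
  have := sup_ge (G := fun p x => `|f x - p|) h01 hbdf.
  rewrite bern_at0 subr0 => h; apply: le_trans h _; apply: le_trans hf hC4.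
have hf1 : `|f (s2c finset.setT) - 1| <= 1 / 4.
  have := sup_ge (G := fun p x => `|f x - p|) h11 hbdf.
  rewrite bern_at1 => h; apply: le_trans h _; apply: le_trans hf hC4.
have hdiff : 1 / 2 <= f (s2c finset.setT) - f (s2c finset.set0).
  move: hf0 hf1; rewrite !ler_norml; lra.
set S := fun x => Sens f eta x.
have hSb : forall x y, (dH x y <= m)%N -> `|f y - f x| <= S x.
  move=> x y hxy; rewrite /S /Sens.
  apply: le_bigmax_cond; rewrite -/fl -hm lez_nat; exact: hxy.
have hS0 : forall x, 0 <= S x.
  by move=> x; apply: le_trans (hSb x x _); rewrite ?dH_refl // subrr normr0.
have hbdS : forall (q : R) x, 0 <= q <= 1 -> `|S x| <= \sum_(y : cube n) `|S y|.
  by move=> q x _; apply: le_sum_abs.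
set s := sup_bern (fun _ x => Sens f eta x).
have hsupS : forall p : R, 0 <= p <= 1 -> bern_exp p S <= s.
  by move=> p hp; apply: (sup_ge (G := fun _ x => S x) hp hbdS).
set f' := fun X : {set 'I_n} => f (s2c X).
set S' := fun X : {set 'I_n} => S (s2c X).
have hS' : forall X Y : {set 'I_n}, X \subset Y -> (#|Y| - #|X| <= m)%N ->
    `|f' Y - f' X| <= S' X.
  by move=> X Y hXY hc; apply: hSb; rewrite dH_sub.
have hch := chain_le hS' mn.
have eFn : Fl f' n = f (s2c finset.setT) by rewrite /Fl levn binn divr1.
have eF0 : Fl f' 0 = f (s2c finset.set0) by rewrite /Fl lev0 bin0 divr1.
have eA0 : Al S' 0 = bern_exp 0 S by rewrite /Al lev0 bin0 divr1 bern_at0.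
have hA0 : Al S' 0 <= s by rewrite eA0; apply: hsupS.
have Age0 : forall k, 0 <= Al S' k.
  move=> k; rewrite /Al divr_ge0 ?ler0n //; apply: sumr_ge0 => X _; exact: hS0.
have hsum1 : \sum_(0 <= w < n) Al S' w <= \sum_(k < n.+1) Al S' k.
  by rewrite big_mkord big_ord_recr /= lerDl.
have hsum2 : \sum_(k < n.+1) Al S' k <= n.+1%:R * s.
  apply: avg_bound => c /andP[c0 c1].
  have -> : \sum_(k < n.+1) Al S' k * (Bp R n k).[c] = bern_exp c S.
    rewrite bern_levels; apply: eq_bigr => k _; rewrite hornerBp /Al.
    have hk : ('C(n, k))%:R != 0 :> R by rewrite pnatr_eq0 -lt0n bin_gt0 -ltnS.
    by rewrite /S' /S; field.
  by apply: hsupS; rewrite !ltW.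
rewrite eFn eF0 in hch.
have s0 : 0 <= s := le_trans (Age0 0%N) hA0.
have hM1 : (1 <= m%:R :> R) by rewrite ler1n.
have hMN : (m%:R <= n%:R :> R) by rewrite ler_nat.
have hkey : m%:R * (1/2) <= n.+1%:R * s + m%:R * s.
  apply: le_trans (ler_wpM2l (ler0n _ _) hdiff) _.
  apply: le_trans hch _; apply: lerD; last by rewrite ler_wpM2l ?ler0n.
  exact: le_trans hsum1 hsum2.
rewrite -natr1 in hkey.
nra.
Qed.
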